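(* Let $n\ge 1$. The number of disjoint preference profiles with $n$ men and $n$ women is at most $(n^2)!$ and is divisible by $(n!)^2$.
   Context: A preference profile for $n$ men and $n$ women consists of, for each man, a strict ranking of the $n$ women (a bijection from the women to $\{1,\dots,n\}$, where $1$ is his favorite), and for each woman, a strict ranking of the $n$ men (a bijection from the men to $\{1,\dots,n\}$). Men and women are labeled, so there are $(n!)^{2n}$ profiles. For a man $M$ and woman $W$, their mutual ranking is the ordered pair $(i,j)$ where $i$ is the rank $M$ gives $W$ and $j$ is the rank $W$ gives $M$. A profile is disjoint if each ordered pair $(i,j)\in\{1,\dots,n\}^2$ occurs as the mutual ranking of exactly one of the $n^2$ man–woman pairs. *)

(* Defs.v *)
From mathcomp Require Import all_boot all_order all_fingroup.
Set Implicit Arguments. Unset Strict Implicit. Unset Printing Implicit Defensive.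

(* Men, women and ranks are all indexed by 'I_n; rank r : 'I_n stands for
   the rank r+1 in {1,...,n}.  A man's ranking of the women is a bijection
   women -> ranks, i.e. a permutation of 'I_n; likewise for women. *)
Definition profile (n : nat) : finType :=
  ({ffun 'I_n -> {perm 'I_n}} * {ffun 'I_n -> {perm 'I_n}})%type.

Definition mutual_ranking n (P : profile n) (m w : 'I_n) : 'I_n * 'I_n :=
  (P.1 m w, P.2 w m).

Definition disjoint_profile n (P : profile n) : bool :=
  [forall ij : 'I_n * 'I_n,
     #|[set mw : 'I_n * 'I_n | mutual_ranking P mw.1 mw.2 == ij]| == 1].

(* Main.v *)
Require Import Defs.
From mathcomp Require Import all_boot all_order all_fingroup.

Set Implicit Arguments.
Section Aux.
Variable n : nat.
Local Notation T := ('I_n * 'I_n)%type.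

Definition mr (P : profile n) (x : T) : T := mutual_ranking P x.1 x.2.

Lemma prof_eq (P Q : profile n) :
  (forall x, mr P x = mr Q x) -> P = Q.
Proof.
case: P Q => [P1 P2] [Q1 Q2] H; congr pair.
  apply/ffunP => m; apply/permP => w.
  by have := H (m, w); rewrite /mr /mutual_ranking /= => -[].
apply/ffunP => w; apply/permP => m.
by have := H (m, w); rewrite /mr /mutual_ranking /= => -[].
Qed.

Lemma disjP (P : profile n) : disjoint_profile P = injectiveb (mr P).
Proof.
apply/idP/idP.
  move=> /forallP H; apply/injectiveP => x y Exy.
  have := H (mr P x); move/cards1P => [z Hz].
  have hx : x \in [set z] by rewrite -Hz inE.
  have hy : y \in [set z] by rewrite -Hz inE; apply/eqP; exact: (esym Exy).
  rewrite !in_set1 in hx hy; by rewrite (eqP hx) (eqP hy).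
move/injectiveP => inj; apply/forallP => ij.
apply/eqP; have -> : [set mw : T | mutual_ranking P mw.1 mw.2 == ij]
   = [set invF inj ij].
  apply/setP => x; rewrite !inE; apply/eqP/eqP.
    by move=> <-; apply: (inj); rewrite f_invF.
  by move=> ->; apply: (f_invF inj).
by rewrite cards1.
Qed.

Definition gT := ({perm 'I_n} * {perm 'I_n})%type.

Definition pact (P : profile n) (g : gT) : profile n :=
  ([ffun m => g.2^-1 * P.1 (g.1^-1 m)], [ffun w => g.1^-1 * P.2 (g.2^-1 w)])%g.

Lemma mr_pact P g x : mr (pact P g) x = mr P (g.1^-1 x.1, g.2^-1 x.2)%g.
Proof. by rewrite /mr /mutual_ranking /pact /= !ffunE !permM. Qed.

Lemma pact1 P : pact P 1%g = P.
Proof. by apply: prof_eq => x; rewrite mr_pact /= !invg1 !perm1; case: x. Qed.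

Lemma pactM P a b : pact P (a * b)%g = pact (pact P a) b.
Proof.
apply: prof_eq => x; rewrite !mr_pact /=.
by case: a b => [a1 a2] [b1 b2] /=; rewrite !invMg !permM.
Qed.

Definition to := TotalAction pact1 pactM.

Lemma pact_disj P g : disjoint_profile P -> disjoint_profile (pact P g).
Proof.
rewrite !disjP => /injectiveP inj; apply/injectiveP => x y.
rewrite !mr_pact => /inj [] /perm_inj e1 /perm_inj e2.
by case: x y e1 e2 => [? ?] [? ?] /= -> ->.
Qed.

End Aux.

Theorem mainTheorem1 (n : nat) (hn : 1 <= n) :
  #|[set P : profile n | disjoint_profile P]| <= (n ^ 2)`! /\
  (n`! ^ 2 %| #|[set P : profile n | disjoint_profile P]|).
Proof.
set D := [set P : profile n | disjoint_profile P].
split.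
  pose F (P : profile n) : {ffun ('I_n * 'I_n) -> ('I_n * 'I_n)} :=
    [ffun x => mr P x].
  have injF : injective F.
    move=> P Q /ffunP H; apply: prof_eq => x; by have := H x; rewrite !ffunE.
  rewrite -(card_imset D injF).
  have -> : (n ^ 2)`! = #|[set f : {ffun ('I_n * 'I_n) -> ('I_n * 'I_n)} | injectiveb f]|.
    by rewrite card_inj_ffuns ffactnn card_prod card_ord.
  apply: subset_leq_card; apply/subsetP => f /imsetP [P]; rewrite /D inE => HP ->.
  rewrite inE; rewrite disjP in HP; apply/injectiveP => x y.
  by rewrite !ffunE => /(injectiveP _ HP).
pose G := [set: gT n]%G.
have actsD : [acts G, on D | to n].
  apply/actsP => g _ P; rewrite /D !inE /=; apply/idP/idP; last exact: pact_disj.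
  move=> H; have := pact_disj (pact P g) (g^-1)%g H; by rewrite -pactM mulgV pact1.
have Horb : {in orbit (to n) G @: D, forall A : {set profile n}, #|A| = #|G|}.
  move=> A /imsetP [P]; rewrite /D inE => HP ->.
  rewrite card_orbit.
  suff -> : ('C_G[P | to n])%g = 1%g by rewrite indexg1.
  apply/trivgP; apply/subsetP => g /setIP [_ /astab1P /= Hg].
  rewrite inE; rewrite disjP in HP.
  have key : forall x, x = (g.1^-1 x.1, g.2^-1 x.2)%g.
    move=> x; apply: (injectiveP _ HP); by rewrite -mr_pact Hg.
  case: g Hg key => g1 g2 _ key /=.
  apply/eqP; congr pair; apply/permP => z; rewrite perm1.
    have := key (z, z) => -[e _]; by rewrite {1}e permKV.
  have := key (z, z) => -[_ e]; by rewrite {1}e permKV.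
rewrite (card_uniform_partition Horb (orbit_partition actsD)).
apply: dvdn_mull.
by rewrite cardsT card_prod card_Sn.
Qed.
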